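(* In the setting of the context, for every unital hermitian cone $N$ on $(K,\ast)$ the following are equivalent: (1) $a_\sigma n^\sigma\in N$ for every $n\in N$ and $\sigma\in G$; (2) $N=M\cap K$ for some unital hermitian cone $M$ on $(D,\ast)$; (3) $N=\lambda^{-1}(L)\cap K$ for some unital hermitian cone $L$ on $(M_n(K),\#)$.
   Context: Let $K/F$ be a finite Galois extension of fields of characteristic $0$ with Galois group $G$, $n=|G|$; write $k^\sigma$ for the image of $k$ under $\sigma$. Let $\Phi$ be a normalized $2$-cocycle and $D=(K/F,\Phi)$ the crossed product: right $K$-vector space with basis $(e_\sigma)_{\sigma\in G}$, $e_{\mathrm{id}}=1$, multiplication $(\sum e_\sigma c_\sigma)(\sum e_\tau d_\tau)=\sum e_{\sigma\tau}\Phi(\sigma,\tau)c_\sigma^\tau d_\tau$. Assume $D$ is a division algebra and $\ast$ an involution on $D$ with $K^\ast\subseteq K$, such that $a_\sigma:=e_\sigma^\ast e_\sigma\in K$ for all $\sigma\in G$ and some unital hermitian cone on $(K,\ast)$ contains all $a_\sigma$. A unital hermitian cone on a ring $R$ with involution $\ast$ is a subset $M\subseteq\{r:r^\ast=r\}$ with $1\in M$, $M+M\subseteq M$, $aMa^\ast\subseteq M$ for all $a\in R$, $M\cap-M=\{0\}$. Let $\lambda\colon D\to M_n(K)$ be the left regular representation, $ae_\tau=\sum_\sigma e_\sigma\lambda(a)_{\sigma\tau}$; for $X=[x_{\sigma\tau}]$ let $X^\ast=[x_{\tau\sigma}^\ast]$, let $A=\mathrm{diag}(a_\sigma)_{\sigma\in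 G}$, and $X^\#=A^{-1}X^\ast A$ (so $\lambda(d^\ast)=\lambda(d)^\#$). *)

(* Defs.v *)
From HB Require Import structures.
From mathcomp Require Import all_boot all_order all_algebra all_fingroup.
Set Implicit Arguments. Unset Strict Implicit. Unset Printing Implicit Defensive.
Import Order.TTheory GRing.Theory.
Local Open Scope ring_scope.

Definition unital_hermitian_cone (R : pzRingType) (s : R -> R) (M : R -> Prop) : Prop :=
  [/\ (forall r, M r -> s r = r),
      M 1,
      (forall x y, M x -> M y -> M (x + y)),
      (forall b x, M x -> M (b * x * s b))
    & (forall x, M x -> M (- x) -> x = 0)].

Definition ring_involution (R : nzRingType) (s : R -> R) : Prop :=
  [/\ (forall x y, s (x + y) = s x + s y),
      (forall x y, s (x * y) = s y * s x),
      s 1 = 1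
    & (forall x, s (s x) = x)].

(** Left regular representation lambda : D -> M_n(K), n = |G|, rows/columns
    indexed by enum_val : 'I_#|gT| -> gT; coord d sigma is the coefficient of
    e_sigma in d (as right K-space).  a e_tau = sum_sigma e_sigma lambda(a)_{sigma tau}. *)
Definition lreg (gT : finGroupType) (K : fieldType) (D : nzRingType)
  (e : gT -> D) (coord : D -> gT -> K) (d : D) : 'M[K]_#|gT| :=
  \matrix_(i, j) coord (d * e (enum_val j)) (enum_val i).

Definition sharp (gT : finGroupType) (K : fieldType) (starK : K -> K)
  (a : gT -> K) (X : 'M[K]_#|gT|) : 'M[K]_#|gT| :=
  diag_mx (\row_i (a (enum_val i))^-1) *m (map_mx starK X)^T
    *m diag_mx (\row_i a (enum_val i)).

(* Main.v *)
Require Import Defs.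
From HB Require Import structures.
From mathcomp Require Import all_boot all_order all_algebra all_fingroup.
Import GRing.Theory.
Local Open Scope ring_scope.

Theorem corollary4p3
  (* K of characteristic 0, G = gT a finite group acting faithfully on K by
     field automorphisms k |-> k^sigma (right action); K/F Galois with group G
     where F is the fixed field. *)
  (K : fieldType) (gT : finGroupType) (act : gT -> {rmorphism K -> K})
  (charK0 : [pchar K] =i pred0)
  (act1 : forall k, act 1%g k = k)
  (actM : forall s t k, act (s * t)%g k = act t (act s k))
  (faithful : forall s, (forall k, act s k = k) -> s = 1%g)
  (* the crossed product D = (K/F, Phi) *)
  (D : nzRingType) (iota : {rmorphism K -> D}) (e : gT -> D)
  (Phi : gT -> gT -> K) (coord : D -> gT -> K)
  (Phi_nz : forall s t, Phi s t != 0)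
  (Phi_norm : forall s, Phi 1%g s = 1 /\ Phi s 1%g = 1)
  (Phi_cocycle : forall s t r,
      Phi (s * t)%g r * act r (Phi s t) = Phi s (t * r)%g * Phi t r)
  (e1 : e 1%g = 1)
  (e_mul : forall s t, e s * e t = e (s * t)%g * iota (Phi s t))
  (e_comm : forall c t, iota c * e t = e t * iota (act t c))
  (coord_span : forall d, d = \sum_(s : gT) e s * iota (coord d s))
  (coord_uniq : forall (c : gT -> K) s,
      coord (\sum_(t : gT) e t * iota (c t)) s = c s)
  (D_division : forall x : D, x != 0 -> exists y, x * y = 1 /\ y * x = 1)
  (* the involution on D, with K^* in K and a_sigma = e_sigma^* e_sigma in K *)
  (star : D -> D) (star_inv : ring_involution star)
  (starK : K -> K) (star_K : forall c, star (iota c) = iota (starK c))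
  (a : gT -> K) (a_def : forall s, star (e s) * e s = iota (a s))
  (a_cone : exists M0 : K -> Prop,
      unital_hermitian_cone starK M0 /\ forall s, M0 (a s))
  (* the statement *)
  (N : K -> Prop) (hN : unital_hermitian_cone starK N) :
  let P1 := forall n s, N n -> N (a s * act s n) in
  let P2 := exists M : D -> Prop,
      unital_hermitian_cone star M /\ forall c, N c <-> M (iota c) in
  let P3 := exists L : 'M[K]_#|gT| -> Prop,
      unital_hermitian_cone (sharp starK a) L /\
      forall c, N c <-> L (lreg e coord (iota c)) in
  (P1 <-> P2) /\ (P2 <-> P3).
Proof.
move=> P1 P2 P3.
case: star_inv => sD sM s1 ss.
have star0 : star 0 = 0.
  have := sD 0 0; rewrite addr0 => H.
  by apply: (addrI (star 0)); rewrite addr0 -H.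
have starN : forall x, star (- x) = - star x.
  by move=> x; apply/eqP; rewrite -subr_eq0 opprK -sD addNr star0.
have star_sum : forall (I : finType) (f : I -> D), star (\sum_i f i) = \sum_i star (f i).
  by move=> I f; apply: (big_morph star sD star0).
have star_inj : forall x y, star x = star y -> x = y.
  by move=> x y H; rewrite -(ss x) H ss.
have iota_inj := fmorph_inj iota.
have skD : forall x y, starK (x + y) = starK x + starK y.
  by move=> x y; apply: iota_inj; rewrite rmorphD -!star_K rmorphD sD.
have skM : forall x y, starK (x * y) = starK x * starK y.
  move=> x y; apply: iota_inj; rewrite [RHS]rmorphM -!star_K rmorphM sM.
  by rewrite !star_K -!rmorphM mulrC.
have sk1 : starK 1 = 1.
  by apply: iota_inj; rewrite -star_K !rmorph1 s1.
have skK : forall x, starK (starK x) = x.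
  by move=> x; apply: iota_inj; rewrite -!star_K ss.
have skB : forall x y, starK (x - y) = starK x - starK y.
  by move=> x y; apply: iota_inj; rewrite rmorphB -!star_K rmorphB sD starN.
pose sK : {rmorphism K -> K} :=
  HB.pack starK (GRing.isZmodMorphism.Build K K starK skB)
     (GRing.isMonoidMorphism.Build K K starK (sk1, skM)).
have sKE : forall x, sK x = starK x by [].
have zd : forall x y : D, x != 0 -> x * y = 0 -> y = 0.
  move=> x y /D_division [z [_ Hzx]] Hxy.
  by rewrite -(mul1r y) -Hzx -mulrA Hxy mulr0.
have actV : forall t c, act t (act t^-1%g c) = c.
  by move=> t c; rewrite -actM mulVg act1.
have e_nz : forall s, e s != 0.
  move=> s; apply/eqP => Hs.
  have := e_mul s s^-1%g; rewrite Hs mul0r mulgV e1 mul1r => /esym/eqP.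
  by rewrite fmorph_eq0 (negPf (Phi_nz _ _)).
have a_nz : forall s, a s != 0.
  move=> s; apply/eqP => Ha.
  have := a_def s; rewrite Ha rmorph0 => /(zd _ _) H.
  apply: (negP (e_nz s)); apply/eqP; apply: H.
  apply/eqP => H0; apply: (negP (e_nz s)); apply/eqP.
  by apply: star_inj; rewrite H0 star0.
have a_herm : forall s, starK (a s) = a s.
  by move=> s; apply: iota_inj; rewrite -star_K -a_def sM ss.
have a1 : a 1%g = 1.
  by apply: iota_inj; rewrite -a_def e1 s1 mul1r rmorph1.
have coord_sum : forall (I : finType) (f : I -> D) s,
    coord (\sum_i f i) s = \sum_i coord (f i) s.
  move=> I f s.
  have -> : \sum_i f i = \sum_t e t * iota (\sum_i coord (f i) t).
    rewrite (eq_bigr (fun t => \sum_i e t * iota (coord (f i) t))); last first.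
      by move=> t _; rewrite rmorph_sum mulr_sumr.
    rewrite exchange_big /=; apply: eq_bigr => i _; exact: coord_span.
  by rewrite coord_uniq.
have coordD : forall x y s, coord (x + y) s = coord x s + coord y s.
  move=> x y s.
  have -> : x + y = \sum_t e t * iota (coord x t + coord y t).
    rewrite {1}(coord_span x) {1}(coord_span y) -big_split /=.
    by apply: eq_bigr => t _; rewrite rmorphD mulrDr.
  by rewrite coord_uniq.
have coordMr : forall x c s, coord (x * iota c) s = coord x s * c.
  move=> x c s.
  have -> : x * iota c = \sum_t e t * iota (coord x t * c).
    rewrite {1}(coord_span x) mulr_suml.
    by apply: eq_bigr => t _; rewrite rmorphM mulrA.
  by rewrite coord_uniq.
have coord_e : forall t c s, coord (e t * iota c) s = if s == t then c else 0.
  move=> t c s.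
  have -> : e t * iota c = \sum_u e u * iota (if u == t then c else 0).
    rewrite (bigD1 t) //= eqxx big1 ?addr0 // => u /negPf ->.
    by rewrite rmorph0 mulr0.
  by rewrite coord_uniq.
have coord_e1 : forall t s, coord (e t) s = if s == t then 1 else 0.
  by move=> t s; rewrite -(mulr1 (e t)) -(rmorph1 iota) coord_e.
have coord_iota : forall c s, coord (iota c) s = if s == 1%g then c else 0.
  by move=> c s; rewrite -(mul1r (iota c)) -e1 coord_e.
have estar : forall s t, exists w, star (e s) * e t = e (s^-1 * t)%g * iota w.
  move=> s t.
  pose psi := Phi s s^-1%g.
  have Hpsi : e s * e s^-1%g = iota psi by rewrite e_mul mulgV e1 mul1r.
  have Hnz : act t psi != 0 by rewrite fmorph_eq0 Phi_nz.
  exists (act (s^-1 * t)%g (a s) * Phi s^-1%g t / act t psi).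
  have H : star (e s) * e t * iota (act t psi) =
           e (s^-1 * t)%g * iota (act (s^-1 * t)%g (a s) * Phi s^-1%g t).
    rewrite -mulrA -e_comm -Hpsi !mulrA a_def -mulrA e_mul mulrA e_comm.
    by rewrite -mulrA -rmorphM.
  rewrite -[LHS]mulr1 -(rmorph1 iota) -(mulfV Hnz) rmorphM mulrA H.
  by rewrite -mulrA -rmorphM.
have sk0 : starK 0 = 0 by rewrite -sKE rmorph0.
have hform : forall y z, coord (star y * z) 1%g =
    \sum_s starK (coord y s) * a s * coord z s.
  move=> y z.
  have Hy : star y = \sum_s iota (starK (coord y s)) * star (e s).
    by rewrite {1}(coord_span y) star_sum; apply: eq_bigr => s _; rewrite sM star_K.
  rewrite Hy {1}(coord_span z) mulr_suml coord_sum; apply: eq_bigr => s _.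
  rewrite mulr_sumr coord_sum (bigD1 s) //= big1 ?addr0.
    by rewrite mulrA -(mulrA (iota _)) a_def -!rmorphM coord_iota eqxx.
  move=> t Hts; have [w Hw] := estar s t.
  rewrite mulrA -(mulrA (iota _)) Hw mulrA e_comm -mulrA -rmorphM -mulrA -rmorphM.
  by rewrite coord_e eq_sym -eq_mulVg1 eq_sym (negPf Hts).
have aco : forall s w, a s * coord w s = coord (star (e s) * w) 1%g.
  move=> s w; rewrite hform (bigD1 s) //= coord_e1 eqxx sk1 mul1r big1 ?addr0 //.
  by move=> t /negPf Hts; rewrite coord_e1 Hts sk0 !mul0r.
have coord0 : forall s, coord 0 s = 0.
  move=> s; have := coordD 0 0 s; rewrite addr0 => H.
  by apply: (addrI (coord 0 s)); rewrite addr0 -H.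
have coordN : forall x s, coord (- x) s = - coord x s.
  by move=> x s; apply/eqP; rewrite -subr_eq0 opprK -coordD addNr coord0.
pose lam := lreg e coord.
have lamE : forall d i j, lam d i j = coord (d * e (enum_val j)) (enum_val i).
  by move=> d i j; rewrite /lam /lreg mxE.
have sum_gT : forall F : gT -> K, \sum_(t : gT) F t = \sum_(k < #|gT|) F (enum_val k).
  by move=> F; rewrite big_enum_val.
have lamM : forall x y, lam (x * y) = lam x *m lam y.
  move=> x y; apply/matrixP => i j; rewrite !mxE.
  under eq_bigr => k _ do rewrite !lamE.
  rewrite -mulrA {1}(coord_span (y * e (enum_val j))) mulr_sumr coord_sum sum_gT.
  by apply: eq_bigr => k _; rewrite mulrA coordMr.
have eqv : forall i j : 'I_#|gT|, (enum_val i == enum_val j) = (i == j).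
  by move=> i j; rewrite (inj_eq enum_val_inj).
have lam1 : lam 1 = 1%:M.
  apply/matrixP => i j; rewrite /lam /lreg !mxE mul1r coord_e1 eqv.
  by case: (i == j).
have lamD : forall x y, lam (x + y) = lam x + lam y.
  by move=> x y; apply/matrixP => i j; rewrite /lam /lreg !mxE mulrDl coordD.
have lamN : forall x, lam (- x) = - lam x.
  by move=> x; apply/matrixP => i j; rewrite /lam /lreg !mxE mulNr coordN.
have lam_inj : forall x, lam x = 0 -> x = 0.
  move=> x Hx.
  have Hc : forall s, coord x s = 0.
    move=> s; have := lamE x (enum_rank s) (enum_rank 1%g).
    by rewrite Hx [in X in X = _]mxE !enum_rankK e1 mulr1 => <-.
  rewrite (coord_span x) big1 // => s _; by rewrite Hc rmorph0 mulr0.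
have lam_iota : forall c, lam (iota c) = diag_mx (\row_i act (enum_val i) c).
  move=> c; apply/matrixP => i j; rewrite /lam /lreg !mxE e_comm coord_e eqv.
  by case: (eqVneq i j) => [->|_]; rewrite ?eqxx ?mulr1n ?mulr0n.
have lam_star : forall d, lam (star d) = sharp starK a (lam d).
  move=> d; apply/matrixP => i j.
  rewrite /sharp mul_mx_diag mul_diag_mx /lam /lreg !mxE.
  apply: (mulfI (a_nz (enum_val i))).
  rewrite [RHS]mulrA [in RHS](mulrA (a _)) mulfV // mul1r aco mulrA -sM hform.
  rewrite (bigD1 (enum_val j)) //= coord_e1 eqxx mulr1 big1 ?addr0 //.
  by move=> t /negPf H; rewrite coord_e1 H mulr0.
pose ct := fun m n (X : 'M[K]_(m, n)) => (map_mx sK X)^T.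
pose am : 'M[K]_#|gT| := diag_mx (\row_i a (enum_val i)).
pose ai : 'M[K]_#|gT| := diag_mx (\row_i (a (enum_val i))^-1).
have sharpE : forall X, sharp starK a X = ai *m ct _ _ X *m am by [].
have ctM : forall m n p (X : 'M[K]_(m, n)) (Y : 'M[K]_(n, p)),
    ct _ _ (X *m Y) = ct _ _ Y *m ct _ _ X.
  by move=> m n p X Y; rewrite /ct map_mxM trmx_mul.
have ctK : forall m n (X : 'M[K]_(m, n)), ct _ _ (ct _ _ X) = X.
  by move=> m n X; apply/matrixP => i j; rewrite !mxE sKE skK.
have ctD : forall m n (X Y : 'M[K]_(m, n)), ct _ _ (X + Y) = ct _ _ X + ct _ _ Y.
  by move=> m n X Y; apply/matrixP => i j; rewrite !mxE rmorphD.
have ctN : forall m n (X : 'M[K]_(m, n)), ct _ _ (- X) = - ct _ _ X.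
  by move=> m n X; apply/matrixP => i j; rewrite !mxE rmorphN.
have ct1 : ct _ _ (1%:M : 'M[K]_#|gT|) = 1%:M.
  by rewrite /ct map_mx1 trmx1.
have ctam : ct _ _ am = am.
  apply/matrixP => i j; rewrite !mxE rmorphMn sKE a_herm eq_sym.
  by case: (eqVneq i j) => [->|_]; rewrite ?eqxx.
have ctai : ct _ _ ai = ai.
  apply/matrixP => i j; rewrite !mxE rmorphMn fmorphV sKE a_herm eq_sym.
  by case: (eqVneq i j) => [->|_]; rewrite ?eqxx.
have aiam : ai *m am = 1%:M.
  rewrite mul_diag_mx; apply/matrixP => i j; rewrite !mxE.
  by case: (eqVneq i j) => [->|_]; rewrite ?mulr1n ?mulr0n ?mulr0 ?mulVf.
have amai : am *m ai = 1%:M.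
  rewrite mul_diag_mx; apply/matrixP => i j; rewrite !mxE.
  by case: (eqVneq i j) => [->|_]; rewrite ?mulr1n ?mulr0n ?mulr0 ?mulfV.
have sharp1 : sharp starK a 1%:M = 1%:M.
  by rewrite sharpE ct1 mulmx1 aiam.
have sharpM : forall X Y, sharp starK a (X *m Y) = sharp starK a Y *m sharp starK a X.
  move=> X Y; rewrite !sharpE ctM.
  by rewrite !mulmxA -[ai *m ct _ _ Y *m am *m ai]mulmxA amai mulmx1.
have sharpK : forall X, sharp starK a (sharp starK a X) = X.
  move=> X; rewrite !sharpE !ctM ctK ctam ctai !mulmxA aiam mul1mx.
  by rewrite -mulmxA aiam mulmx1.
have sharpD : forall X Y, sharp starK a (X + Y) = sharp starK a X + sharp starK a Y.
  by move=> X Y; rewrite !sharpE ctD mulmxDr mulmxDl.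
have sharpN : forall X, sharp starK a (- X) = - sharp starK a X.
  by move=> X; rewrite !sharpE ctN mulmxN mulNmx.
pose fX := fun (v : 'rV[K]_#|gT|) (X : 'M[K]_#|gT|) => (map_mx sK v *m am *m X *m v^T) 0 0.
have fXD : forall v X Y, fX v (X + Y) = fX v X + fX v Y.
  by move=> v X Y; rewrite /fX mulmxDr mulmxDl mxE.
have fXN : forall v X, fX v (- X) = - fX v X.
  by move=> v X; rewrite /fX mulmxN mulNmx mxE.
have fXB : forall v B X, fX v (B *m X *m sharp starK a B) =
    fX ((sharp starK a B *m v^T)^T) X.
  move=> v B X.
  have Hm : map_mx sK ((sharp starK a B *m v^T)^T) = map_mx sK v *m am *m B *m ai.
    rewrite -map_trmx -/(ct _ _ _) ctM sharpE !ctM ctK ctam ctai !mulmxA.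
    by rewrite /ct map_trmx trmxK.
  rewrite /fX Hm trmxK !mulmxA -[_ *m ai *m am]mulmxA aiam mulmx1.
  by [].
have fXdiag : forall v (d : 'rV[K]_#|gT|), fX v (diag_mx d) =
    \sum_i sK (v 0 i) * a (enum_val i) * d 0 i * v 0 i.
  move=> v d; rewrite /fX mul_mx_diag mul_mx_diag mxE.
  by apply: eq_bigr => i _; rewrite !mxE.
pose bil := fun (v w : 'rV[K]_#|gT|) (Y : 'M[K]_#|gT|) => (map_mx sK v *m Y *m w^T) 0 0.
have bilDl : forall v w z Y, bil (v + w) z Y = bil v z Y + bil w z Y.
  by move=> v w z Y; rewrite /bil map_mxD !mulmxDl mxE.
have bilDr : forall v w z Y, bil v (w + z) Y = bil v w Y + bil v z Y.
  move=> v w z Y; rewrite /bil.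
  have -> : (w + z)^T = w^T + z^T by apply/matrixP => i j; rewrite !mxE.
  by rewrite mulmxDr mxE.
have bilZl : forall c v w Y, bil (c *: v) w Y = sK c * bil v w Y.
  by move=> c v w Y; rewrite /bil map_mxZ -!scalemxAl mxE.
have bilZr : forall c v w Y, bil v (c *: w) Y = c * bil v w Y.
  move=> c v w Y; rewrite /bil.
  have -> : (c *: w)^T = c *: w^T by apply/matrixP => i j; rewrite !mxE.
  by rewrite -scalemxAr mxE.
have bil_delta : forall i j Y, bil (delta_mx 0 i) (delta_mx 0 j) Y = Y i j.
  move=> i j Y; rewrite /bil map_delta_mx trmx_delta -rowE -colE.
  by rewrite !mxE.
have polar : forall X, sharp starK a X = X -> (forall v, fX v X = 0) -> X = 0.
  move=> X HX Hv.
  pose Y := am *m X.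
  have HY : forall v, bil v v Y = 0.
    by move=> v; rewrite /bil /Y mulmxA; apply: Hv.
  have Hh : forall i j, sK (Y j i) = Y i j.
    have HctY : ct _ _ Y = Y.
      rewrite /Y ctM ctam -{2}HX sharpE !mulmxA amai mul1mx.
      by [].
    move=> i j; rewrite -{2}HctY /ct !mxE //.
  have HY0 : Y = 0.
    apply/matrixP => i j; rewrite (_ : (0 : 'M[K]_#|gT|) i j = 0); last by rewrite mxE.
    have Hii : forall k, Y k k = 0.
      by move=> k; rewrite -bil_delta HY.
    have Hc : forall c, c * Y i j + sK c * sK (Y i j) = 0.
      move=> c; have := HY (delta_mx 0 i + c *: delta_mx 0 j).
      rewrite !bilDl !bilDr !bilZl !bilZr !bil_delta !Hii Hh.
      by rewrite !mulr0 add0r addr0.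
    have Hs := Hc 1; rewrite mul1r rmorph1 mul1r in Hs.
    have HsK : sK (Y i j) = - Y i j by apply/eqP; rewrite -addr_eq0 addrC Hs.
    case: (eqVneq (Y i j) 0) => [->//|Hy0].
    have Hall : forall c, sK c = c.
      move=> c; have := Hc c; rewrite HsK mulrN -mulrBl => /eqP.
      by rewrite mulf_eq0 (negPf Hy0) orbF subr_eq0 => /eqP.
    move: Hs; rewrite Hall => /eqP; rewrite -mulr2n -mulr_natr mulf_eq0.
    by rewrite (negPf Hy0) /= (pcharf0P _).1.
  by rewrite -[X]mul1mx -aiam -mulmxA -/Y HY0 mulmx0.
case: hN => Nh N1 NA NC Nanti.
have N0 : N 0 by have := NC 0 1 N1; rewrite !mul0r.
have Nsum : forall (I : finType) (F : I -> K), (forall i, N (F i)) -> N (\sum_i F i).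
  by move=> I F HF; apply: (big_ind N N0 NA) => i _; apply: HF.
have Nterm : forall x c, N x -> N (sK c * x * c).
  by move=> x c Hx; have := NC (sK c) x Hx; rewrite sKE skK.
have H21 : P2 -> P1.
  move=> [M [[Mh M1 MA MC Manti] HM]] n s Nn; apply/HM.
  have := MC (star (e s)) _ ((HM n).1 Nn).
  by rewrite ss -mulrA e_comm mulrA a_def -rmorphM.
have H32 : P3 -> P2.
  move=> [L [[Lh L1 LA LC Lanti] HL]].
  exists (fun d => L (lam d)); split; last exact: HL.
  split.
  - move=> d Hd; apply/eqP; rewrite -subr_eq0; apply/eqP; apply: lam_inj.
    by rewrite lamD lamN lam_star (Lh _ Hd) subrr.
  - by rewrite lam1; exact: L1.
  - by move=> x y Hx Hy; rewrite lamD; apply: LA.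
  - by move=> b x Hx; rewrite !lamM lam_star; exact: LC _ _ Hx.
  - move=> x Hx Hnx; apply: lam_inj; apply: Lanti => //.
    by rewrite -lamN.
have H13 : P1 -> P3.
  move=> HP1.
  have Na : forall s, N (a s).
    by move=> s; have := HP1 1 s N1; rewrite rmorph1 mulr1.
  exists (fun X => sharp starK a X = X /\ forall v, N (fX v X)); split.
    split.
    - by move=> X [].
    - split; first exact: sharp1.
      move=> v.
      have -> : (1 : 'M[K]_#|gT|) = diag_mx (const_mx 1) by rewrite diag_const_mx.
      rewrite fXdiag; apply: Nsum => i; rewrite mxE mulr1; exact: Nterm.
    - move=> X Y [HX1 HX2] [HY1 HY2]; split; first by rewrite sharpD HX1 HY1.
      by move=> v; rewrite fXD; apply: NA.
    - move=> B X [HX1 HX2].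
      rewrite -[_ * _ * _]/(B *m X *m sharp starK a B); split.
        by rewrite sharpM [sharp _ _ (B *m X)]sharpM sharpK HX1 mulmxA.
      by move=> v; rewrite fXB; apply: HX2.
    - move=> X [HX1 HX2] [_ HX3]; apply: polar => // v.
      by apply: Nanti (HX2 v) _; rewrite -fXN; apply: HX3.
  move=> c; split.
    move=> Nc; split.
      by rewrite -/lam -lam_star star_K (Nh c Nc).
    move=> v; rewrite -/lam lam_iota fXdiag; apply: Nsum => i.
    rewrite mxE -[sK _ * a _ * _]mulrA; apply: Nterm; exact: HP1.
  move=> [_ H]; have := H (delta_mx 0 (enum_rank 1%g)).
  rewrite -/lam lam_iota fXdiag (bigD1 (enum_rank 1%g)) //=.
  rewrite big1 ?addr0; last first.
    by move=> i Hi; rewrite mxE (negPf Hi) andbF mulr0.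
  by rewrite !mxE eqxx /= enum_rankK a1 act1 eqxx sk1 !mul1r mulr1.
by split; split; auto.
Qed.
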